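(* Let $d\ge3$ and $\mathcal D=\mathbb S_1^{d-1}$. Then for any $M\in\mathrm{SL}(d+1,\mathbb R)$, $\mathcal G_{\mathcal D}(M)\le\sigma_d+1$, where $\sigma_d$ is the kissing number of $\mathbb R^d$.
   Context: $\mathbb S_1^{d-1}$ is the unit sphere in $\mathbb R^d$. Elements of $\mathbb R^{d+1}$ are row vectors $(u,\vec v)$ with $u\in\mathbb R$, $\vec v\in\mathbb R^d$; $\mathbb Z^{d+1}M$ is the lattice $\{\vec mM:\vec m\in\mathbb Z^{d+1}\}$. For $\mathcal D\subseteq\mathbb S_1^{d-1}$ and $t\in(0,1)$, $\mathcal Q_{\mathcal D}(M,t)=\{(u,\vec v)\in\mathbb Z^{d+1}M : -t<u<1-t,\ \vec v\in\mathbb R_{>0}\mathcal D\}$, $F_{\mathcal D}(M,t)=\min\{|\vec v| : (u,\vec v)\in\mathcal Q_{\mathcal D}(M,t)\}$, and $\mathcal G_{\mathcal D}(M)=|\{F_{\mathcal D}(M,t):0<t<1\}|$. The kissing number $\sigma_d$ is the maximal number of non-overlapping unit balls in $\mathbb R^d$ touching a fixed unit ball. *)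

(* Defs.v *)
From HB Require Import structures.
From mathcomp Require Import all_boot all_order all_algebra.
From mathcomp Require Import boolp classical_sets reals ereal.
Set Implicit Arguments. Unset Strict Implicit. Unset Printing Implicit Defensive.
Import Order.TTheory GRing.Theory Num.Theory.
Local Open Scope ring_scope.
Local Open Scope classical_set_scope.

Definition enorm (R : realType) (n : nat) (v : 'rV[R]_n) : R :=
  Num.sqrt (\sum_(i < n) v 0 i ^+ 2).

Definition unit_sphere (R : realType) (d : nat) : set 'rV[R]_d :=
  [set w | enorm w = 1].

Definition lattice (R : realType) (d : nat) (M : 'M[R]_(1 + d)) : set 'rV[R]_(1 + d) :=
  [set x | exists m : 'rV[int]_(1 + d), x = map_mx intr m *m M].

Definition cone (R : realType) (d : nat) (D : set 'rV[R]_d) : set 'rV[R]_d :=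
  [set v | exists r : R, 0 < r /\ exists2 w, D w & v = r *: w].

(* Q_D(M,t): lattice points (u, v) (u = first coordinate, v = last d
   coordinates) with -t < u < 1 - t and v in R_{>0} D *)
Definition Qset (R : realType) (d : nat) (D : set 'rV[R]_d)
    (M : 'M[R]_(1 + d)) (t : R) : set 'rV[R]_(1 + d) :=
  [set x | lattice M x /\ - t < lsubmx x 0 0 < 1 - t /\ cone D (rsubmx x)].

(* F_D(M,t) = min { |v| : (u,v) in Q_D(M,t) }, taken as the infimum
   (which equals the minimum whenever the minimum exists). *)
Definition Fval (R : realType) (d : nat) (D : set 'rV[R]_d)
    (M : 'M[R]_(1 + d)) (t : R) : R :=
  inf [set enorm (rsubmx x) | x in Qset D M t].

(* The set { F_D(M,t) : 0 < t < 1 } whose cardinality is G_D(M) *)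
Definition Fvalues (R : realType) (d : nat) (D : set 'rV[R]_d)
    (M : 'M[R]_(1 + d)) : set R :=
  [set Fval D M t | t in [set t : R | 0 < t < 1]].

(* n non-overlapping unit balls in R^d all touching the unit ball at the
   origin: centers c_i with |c_i| = 2 and |c_i - c_j| >= 2 for i <> j. *)
Definition kissing_config (R : realType) (d n : nat) : Prop :=
  exists c : 'I_n -> 'rV[R]_d,
    (forall i, enorm (c i) = 2) /\
    (forall i j, i != j -> 2 <= enorm (c i - c j)).

(* The kissing number sigma_d: the maximal such n (as a supremum in the
   extended reals). *)
Definition kissing_number (R : realType) (d : nat) : \bar R :=
  ereal_sup [set (n%:R)%:E | n in [set n : nat | kissing_config R d n]].

(* Main.v *)
Require Import Defs.
From HB Require Import structures.
From mathcomp Require Import all_boot all_order all_algebra.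
From mathcomp Require Import boolp classical_sets reals ereal.
From mathcomp Require Import ring lra.
Set Implicit Arguments. Unset Strict Implicit. Unset Printing Implicit Defensive.
Import Order.TTheory GRing.Theory Num.Theory.
Local Open Scope ring_scope.
Local Open Scope classical_set_scope.

Definition sqn (R : realType) (n : nat) (v : 'rV[R]_n) : R := \sum_(i < n) v 0 i ^+ 2.
Definition dotp (R : realType) (n : nat) (v w : 'rV[R]_n) : R := \sum_(i < n) v 0 i * w 0 i.

Lemma sqn_ge0 (R : realType) (n : nat) (v : 'rV[R]_n) : 0 <= sqn v.
Proof. by apply: sumr_ge0 => i _; rewrite sqr_ge0. Qed.

Lemma enormE (R : realType) (n : nat) (v : 'rV[R]_n) : enorm v = Num.sqrt (sqn v).
Proof. by []. Qed.

Lemma enorm_ge0 (R : realType) (n : nat) (v : 'rV[R]_n) : 0 <= enorm v.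
Proof. exact: sqrtr_ge0. Qed.

Lemma sqn_enorm (R : realType) (n : nat) (v : 'rV[R]_n) : enorm v ^+ 2 = sqn v.
Proof. by rewrite enormE sqr_sqrtr // sqn_ge0. Qed.

Lemma sqn_eq0 (R : realType) (n : nat) (v : 'rV[R]_n) : (sqn v == 0) = (v == 0).
Proof.
apply/idP/idP; last first.
  by move/eqP->; apply/eqP; apply: big1 => i _; rewrite mxE expr0n.
rewrite psumr_eq0; last by move=> i _; rewrite sqr_ge0.
move/allP => H; apply/eqP/matrixP => i j; rewrite (ord1 i) mxE.
have := H j (mem_index_enum _); rewrite implyTb sqrf_eq0 => /eqP //.
Qed.

Lemma enorm_eq0 (R : realType) (n : nat) (v : 'rV[R]_n) : (enorm v == 0) = (v == 0).
Proof. by rewrite enormE sqrtr_eq0 -sqn_eq0 eq_le sqn_ge0 andbT. Qed.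

Lemma sqnZB (R : realType) (n : nat) (a b : R) (v w : 'rV[R]_n) :
  sqn (a *: v - b *: w) = a ^+ 2 * sqn v + b ^+ 2 * sqn w - 2 * a * b * dotp v w.
Proof.
rewrite /sqn /dotp !mulr_sumr -big_split /= -sumrB.
by apply: eq_bigr => i _; rewrite !mxE; ring.
Qed.

Lemma sqnZ (R : realType) (n : nat) (a : R) (v : 'rV[R]_n) :
  sqn (a *: v) = a ^+ 2 * sqn v.
Proof.
by rewrite /sqn mulr_sumr; apply: eq_bigr => i _; rewrite !mxE; ring.
Qed.

Lemma enormZ (R : realType) (n : nat) (a : R) (v : 'rV[R]_n) :
  enorm (a *: v) = `|a| * enorm v.
Proof. by rewrite !enormE sqnZ sqrtrM ?sqr_ge0 // sqrtr_sqr. Qed.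

Definition kc (R : realType) (n : nat) (w : 'rV[R]_n) : 'rV[R]_n := (2 / enorm w) *: w.

Lemma enorm_kc (R : realType) (n : nat) (w : 'rV[R]_n) : w != 0 -> enorm (kc w) = 2.
Proof.
move=> w0; have a0 : 0 < enorm w by rewrite lt_def enorm_eq0 w0 enorm_ge0.
rewrite /kc enormZ ger0_norm ?divr_ge0 ?ltW //.
by rewrite mulfVK // gt_eqF.
Qed.

Lemma kc_pair (R : realType) (n : nat) (w1 w2 : 'rV[R]_n) : w1 != 0 -> w2 != 0 ->
  sqn w1 <= sqn (w1 - w2) -> sqn w2 <= sqn (w1 - w2) -> 2 <= enorm (kc w1 - kc w2).
Proof.
move=> w10 w20.
have a0 : 0 < enorm w1 by rewrite lt_def enorm_eq0 w10 enorm_ge0.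
have b0 : 0 < enorm w2 by rewrite lt_def enorm_eq0 w20 enorm_ge0.
have e1 : w1 - w2 = 1 *: w1 - 1 *: w2 by rewrite !scale1r.
rewrite e1 sqnZB -!sqn_enorm.
set a := enorm w1; set b := enorm w2; set x := dotp w1 w2.
move=> h1 h2.
have hx : 2 * x <= a * b.
  rewrite !expr1n !mul1r !mulr1 in h1 h2.
  case: (lerP a b) => hab.
    have : a * a <= a * b by rewrite ler_pM2l.
    rewrite expr2 in h1 h2; lra.
  have : b * b <= a * b by rewrite ler_pM2r // ltW.
  rewrite expr2 in h1 h2; lra.
have : 4 <= enorm (kc w1 - kc w2) ^+ 2.
  rewrite sqn_enorm /kc sqnZB -!sqn_enorm -/a -/b -/x.
  have -> : (2 / a) ^+ 2 * a ^+ 2 = 4 by field; rewrite gt_eqF.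
  have -> : (2 / b) ^+ 2 * b ^+ 2 = 4 by field; rewrite gt_eqF.
  have -> : 2 * (2 / a) * (2 / b) * x = 8 * x / (a * b).
    by field; rewrite ?gt_eqF.
  have : 8 * x / (a * b) <= 4 by rewrite ler_pdivrMr ?mulr_gt0 //; nra.
  lra.
have := enorm_ge0 (kc w1 - kc w2); nra.
Qed.

Definition Uc (R : realType) (d : nat) (x : 'rV[R]_(1 + d)) : R := lsubmx x 0 0.

Lemma UcN (R : realType) (d : nat) (x : 'rV[R]_(1 + d)) : Uc (- x) = - Uc x.
Proof. by rewrite /Uc raddfN mxE. Qed.
Lemma UcB (R : realType) (d : nat) (x y : 'rV[R]_(1 + d)) : Uc (x - y) = Uc x - Uc y.
Proof. by rewrite /Uc raddfB !mxE. Qed.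

Lemma enormN (R : realType) (n : nat) (v : 'rV[R]_n) : enorm (- v) = enorm v.
Proof. by rewrite -scaleN1r enormZ normrN normr1 mul1r. Qed.

Lemma latticeN (R : realType) (d : nat) (M : 'M[R]_(1 + d)) x :
  lattice M x -> lattice M (- x).
Proof. by case=> m ->; exists (- m); rewrite map_mxN mulNmx. Qed.

Lemma latticeB (R : realType) (d : nat) (M : 'M[R]_(1 + d)) x y :
  lattice M x -> lattice M y -> lattice M (x - y).
Proof.
by case=> m ->; case=> m' ->; exists (m - m'); rewrite map_mxB mulmxBl.
Qed.

Lemma cone_sphereP (R : realType) (d : nat) (v : 'rV[R]_d) :
  cone (@unit_sphere R d) v <-> v != 0.
Proof.
split.
  case=> r [r0 [w /= hw ->]]; rewrite scaler_eq0 negb_or gt_eqF //=.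
  by rewrite -enorm_eq0 hw oner_neq0.
move=> v0; have a0 : 0 < enorm v by rewrite lt_def enorm_eq0 v0 enorm_ge0.
exists (enorm v); split => //; exists ((enorm v)^-1 *: v).
  by rewrite /unit_sphere /= enormZ ger0_norm ?invr_ge0 ?ltW // mulVf // gt_eqF.
by rewrite scalerA mulfV ?scale1r // gt_eqF.
Qed.

Lemma QsetP (R : realType) (d : nat) (M : 'M[R]_(1 + d)) t x :
  Qset (@unit_sphere R d) M t x <->
  [/\ lattice M x, - t < Uc x, Uc x < 1 - t & rsubmx x != 0].
Proof.
rewrite /Qset /= cone_sphereP; split.
  by case=> [h1 [/andP[h2 h3] h4]].
by case=> h1 h2 h3 h4; split=> //; split=> //; apply/andP.
Qed.

Lemma Fval_lb (R : realType) (d : nat) (M : 'M[R]_(1 + d)) t x :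
  Qset (@unit_sphere R d) M t x -> Fval (@unit_sphere R d) M t <= enorm (rsubmx x).
Proof.
move=> hx; apply: ge_inf; last by exists x.
by exists 0 => e [y _ <-]; apply: enorm_ge0.
Qed.

Lemma Fval_adh (R : realType) (d : nat) (M : 'M[R]_(1 + d)) t x eps :
  Qset (@unit_sphere R d) M t x -> 0 < eps ->
  exists2 y, Qset (@unit_sphere R d) M t y &
     enorm (rsubmx y) < Fval (@unit_sphere R d) M t + eps.
Proof.
move=> hx e0.
have hinf : has_inf [set enorm (rsubmx x) | x in Qset (@unit_sphere R d) M t].
  split; first by exists (enorm (rsubmx x)), x.
  by exists 0 => e [y _ <-]; apply: enorm_ge0.
have [e [y hy <-] he] := inf_adherent e0 hinf.
by exists y.
Qed.

Definition Sp (R : realType) (d : nat) (M : 'M[R]_(1 + d)) : set R :=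
  [set e | exists y, [/\ lattice M y, `|Uc y| < 2^-1, rsubmx y != 0 & e = enorm (rsubmx y)]].

Lemma Sp_Q (R : realType) (d : nat) (M : 'M[R]_(1 + d)) t e :
  0 < t < 1 -> Sp M e -> exists z, Qset (@unit_sphere R d) M t z /\ enorm (rsubmx z) = e.
Proof.
move=> /andP[t0 t1] [y [ly uy vy ->]].
have h2 : (2^-1 : R) = 1/2 by rewrite div1r.
rewrite h2 in uy.
case: (boolP ((- t < Uc y) && (Uc y < 1 - t))) => [/andP[h1 h3]|hn].
  by exists y; split => //; apply/QsetP; split.
exists (- y); split; last by rewrite raddfN enormN.
apply/QsetP; split; first exact: latticeN.
- rewrite UcN; move: hn uy; rewrite negb_and -!leNgt.
  case: (lerP 0 (Uc y)) => hu.
    by rewrite ger0_norm // => /orP[] ? ?; lra.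
  by rewrite ltr0_norm // => /orP[] ? ?; lra.
- rewrite UcN; move: hn uy; rewrite negb_and -!leNgt.
  case: (lerP 0 (Uc y)) => hu.
    by rewrite ger0_norm // => /orP[] ? ?; lra.
  by rewrite ltr0_norm // => /orP[] ? ?; lra.
by rewrite raddfN oppr_eq0.
Qed.

Lemma pos_min (R : realType) (s : seq R) :
  all (fun x => 0 < x) s -> exists2 e : R, 0 < e & all (fun x => e <= x) s.
Proof.
elim: s => [|a s IH] /=; first by move=> _; exists 1.
move=> /andP[a0 /IH [e e0 he]]; exists (Order.min a e); first by rewrite lt_min a0.
rewrite ge_min lexx /=; apply/allP => x xs; rewrite ge_min.
by move/allP: he => /(_ x xs) ->; rewrite orbT.
Qed.

Lemma gap_lem (R : realType) (n : nat) (f : 'I_n -> R) i :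
  exists2 e : R, 0 < e & forall j, f i < f j -> f i + e <= f j.
Proof.
have /pos_min [e e0 he] : all (fun x => 0 < x) [seq f j - f i | j <- enum 'I_n & f i < f j].
  by rewrite all_map; apply/allP => j; rewrite mem_filter /= subr_gt0 => /andP[].
exists e => // j hj; move/allP: he => /(_ (f j - f i)).
rewrite (map_f (fun j => f j - f i)) ?(mem_filter, hj, mem_enum, mem_index_enum) // => /(_ isT).
by rewrite lerBrDl addrC.
Qed.

Unset Implicit Arguments.

Theorem theorem6p1 (R : realType) (d : nat) (hd : (3 <= d)%N)
    (M : 'M[R]_(1 + d)) (hM : \det M = 1)
    (n : nat) (f : 'I_n -> R) (finj : injective f)
    (fval : forall i, Fvalues (@unit_sphere R d) M (f i)) :
  ((n%:R)%:E <= kissing_number R d + 1%:E)%E.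
Proof.
set D := @unit_sphere R d.
have : forall i, exists t, (0 < t < 1) /\ Fval D M t = f i.
  by move=> i; case: (fval i) => t h1 h2; exists t.
case/choice => t ht.
pose good i := (exists x, Qset D M (t i) x) /\
   exists g, f i < g /\ forall e, Sp M e -> g <= e.
have bad1 : forall i j, ~ good i -> ~ good j -> i = j.
  move=> i j gi gj; apply: finj.
  case: (pselect (exists e, Sp M e)) => [[e0 he0]|nS].
    have hQ k : exists x, Qset D M (t k) x.
      by have [z [hz _]] := Sp_Q (ht k).1 he0; exists z.
    have hlb k e : Sp M e -> f k <= e.
      move=> he; have [z [hz <-]] := Sp_Q (ht k).1 he.
      by rewrite -(ht k).2; apply: Fval_lb.
    have hb k : ~ good k -> forall g, f k < g -> exists2 e, Sp M e & e < g.
      move=> gk g hg; apply: contrapT => hn; apply: gk; split; first exact: hQ.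
      exists g; split => // e he; apply: contrapT => hlt; apply: hn.
      by exists e => //; rewrite ltNge; apply/negP.
    apply/eqP; rewrite eq_le; apply/andP; split; rewrite leNgt; apply/negP => hlt.
      by have [e he hle] := hb _ gj _ hlt; have := hlb i e he; have := hlb j e he; lra.
    by have [e he hle] := hb _ gi _ hlt; have := hlb i e he; have := hlb j e he; lra.

  have h0 k : ~ good k -> f k = 0.
    move=> gk; case: (pselect (exists x, Qset D M (t k) x)) => hq.
      exfalso; apply: gk; split => //; exists (f k + 1); split; first by lra.
      by move=> e he; exfalso; apply: nS; exists e.
    rewrite -(ht k).2 /Fval.
    have -> : Qset D M (t k) = set0.
      by apply/seteqP; split => x // hx; exfalso; apply: hq; exists x.
    by rewrite image_set0 inf0.
  by rewrite h0 // h0.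
have : forall i, exists x, good i -> [/\ Qset D M (t i) x,
    (forall j, f i < f j -> enorm (rsubmx x) < f j) &
    (forall e, Sp M e -> enorm (rsubmx x) < e)].
  move=> i; case: (pselect (good i)) => gi; last by exists 0 => /gi.
  case: (gi) => [[x0 hx0] [g [hg hS]]].
  have [del del0 hdel] := gap_lem f i.
  have e0 : 0 < Order.min del (g - f i) by rewrite lt_min del0 subr_gt0.
  have [y hy hyl] := Fval_adh hx0 e0.
  rewrite (ht i).2 in hyl.
  exists y => _; split => //.
    move=> j hj; apply: (lt_le_trans hyl); apply: le_trans (hdel _ hj).
    by rewrite lerD2l ge_min lexx.
  move=> e he; apply: (lt_le_trans hyl); apply: le_trans (hS _ he).
  by rewrite -lerBrDl ge_min lexx orbT.
case/choice => x hx.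
pose z i := if 0 <= Uc (x i) then x i else - x i.
pose w i := rsubmx (z i).
have hz : forall i, good i -> [/\ lattice M (z i), 2^-1 <= Uc (z i), Uc (z i) < 1,
     w i != 0 & enorm (w i) = enorm (rsubmx (x i))].
  move=> i gi; have [/QsetP [l1 l2 l3 l4] _ hS] := hx i gi.
  have hw : enorm (w i) = enorm (rsubmx (x i)).
    by rewrite /w /z; case: ifP => _ //; rewrite raddfN enormN.
  have hU : Uc (z i) = `|Uc (x i)|.
    by rewrite /z; case: ifP => h; [rewrite ger0_norm | rewrite UcN ltr0_norm // ltNge h].
  have hl : lattice M (z i) by rewrite /z; case: ifP => _ //; apply: latticeN.
  have hw0 : w i != 0 by rewrite /w /z; case: ifP => _ //; rewrite raddfN oppr_eq0.
  have t01 := (ht i).1; move/andP: t01 => [t0 t1].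
  split => //.
  - rewrite leNgt; apply/negP => hlt.
    have hs : Sp M (enorm (w i)) by exists (z i); split => //; rewrite hU normr_id -hU.
    by have := hS _ hs; rewrite hw ltxx.
  - rewrite hU; case: (lerP 0 (Uc (x i))) => h; [rewrite ger0_norm | rewrite ltr0_norm]; lra.
have key : forall i j, good i -> good j -> f i < f j ->
    sqn (w i) <= sqn (w i - w j) /\ sqn (w j) <= sqn (w i - w j).
  move=> i j gi gj hij.
  have [_ hi _] := hx i gi; have [hqj _ hSj] := hx j gj.
  have [_ _ hSi] := (hx i gi).
  have [lzi ui1 ui2 wi0 ewi] := hz i gi; have [lzj uj1 uj2 wj0 ewj] := hz j gj.
  have hlt : enorm (w i) < enorm (w j).
    rewrite ewi ewj; apply: (lt_le_trans (hi _ hij)).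
    by rewrite -(ht j).2; apply: Fval_lb.
  have hne : w i - w j != 0.
    by rewrite subr_eq0; apply/eqP => he; move: hlt; rewrite he ltxx.
  have hs : Sp M (enorm (w i - w j)).
    exists (z i - z j); split.
    - exact: latticeB.
    - rewrite UcB; have h2 : (2^-1 : R) = 1/2 by rewrite div1r.
      rewrite h2 in ui1 uj1 *; rewrite ltr_norml; apply/andP; split; lra.
    - by rewrite raddfB.
    - by rewrite raddfB.
  have a1 := hSi _ hs; have a2 := hSj _ hs.
  rewrite -ewi in a1; rewrite -ewj in a2.
  have g1 := enorm_ge0 (w i); have g2 := enorm_ge0 (w j).
  by rewrite -!sqn_enorm; split; nra.
have sep : forall i j, good i -> good j -> i != j -> 2 <= enorm (kc (w i) - kc (w j)).
  move=> i j gi gj nij.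
  have [_ _ _ wi0 _] := hz i gi; have [_ _ _ wj0 _] := hz j gj.
  have fne : f i != f j by apply: contra nij => /eqP /finj ->.
  case: (ltgtP (f i) (f j)) fne => // hij _.
    by have [k1 k2] := key i j gi gj hij; apply: kc_pair.
  have [k1 k2] := key j i gj gi hij.
  rewrite -enormN opprB; apply: kc_pair => //.
pose G : {set 'I_n} := [set i | `[< good i >]]%SET.
have gG : forall i, i \in G -> good i by move=> i; rewrite inE => /asboolP.
have kc_ok : kissing_config R d #|G|.
  exists (fun m => kc (w (enum_val m))); split.
    move=> m; have [_ _ _ w0 _] := hz _ (gG _ (enum_valP m)); exact: enorm_kc.
  move=> m m' hm; apply: sep; try exact: gG (enum_valP _).
  by apply: contra hm => /eqP /enum_val_inj ->.
have hcard : (n <= #|G|.+1)%N.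
  have hc : (#|G| + #|~: G| = n)%N by rewrite cardsC card_ord.
  apply: (@leq_trans (#|G| + #|~: G|)%N); first by rewrite hc.
  rewrite -addn1 leq_add2l.
  case: (set_0Vmem (~: G)) => [->|[i0 hi0]]; first by rewrite cards0.
  rewrite -(cards1 i0); apply: subset_leq_card; apply/fintype.subsetP => j hj.
  rewrite inE; apply/eqP; apply: bad1.
    by move: hj; rewrite !inE => /negP hn gj; apply: hn; apply/asboolP.
  by move: hi0; rewrite !inE => /negP hn gj; apply: hn; apply/asboolP.
have hks : ((#|G|%:R)%:E <= kissing_number R d)%E.
  by apply: ereal_sup_ubound; exists #|G|.
apply: le_trans (leeD2r _ hks).
by rewrite -EFinD lee_fin natr1 ler_nat.
Qed.
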